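(* Let $A\in\mathbb{C}\setminus\{0\}$, let $\sqrt{A}$ denote either square root of $A$, and let $|q|<1$. Define $G(A;q):=\sum_{n\geq0}\frac{q^{n^2+2n}(A;q^2)_n}{(q^2;q^2)_n}$. Then $$G(A;q)=\frac1{2\sqrt{A}} (-q;q^2)_{\infty}\left[(-\sqrt{A};-q)_{\infty}- (\sqrt{A};-q)_{\infty}\right].$$
   Context: The $q$-Pochhammer symbol: $(a;q)_0=1$, $(a;q)_n=\prod_{j=0}^{n-1}(1-aq^j)$ for $n\ge1$, and $(a;q)_\infty=\prod_{j\ge0}(1-aq^j)$. *)

(* Defs.v *)
From Stdlib Require Import Reals.
From Coquelicot Require Import Coquelicot.
Open Scope C_scope.

Fixpoint qpoch (a q : Complex.C) (n : nat) : Complex.C :=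
  match n with
  | O => 1
  | S m => qpoch a q m * (1 - a * pow_n q m)
  end.

Definition qpoch_inf_is (a q L : Complex.C) : Prop :=
  filterlim (fun n => qpoch a q n) eventually (locally L).

Definition G_term (A q : Complex.C) (n : nat) : Complex.C :=
  pow_n q (n * n + 2 * n) * qpoch A (q * q) n / qpoch (q * q) (q * q) n.

(* Main.v *)
Require Import Defs.
From Stdlib Require Import Reals Lra Lia ClassicalEpsilon.
From Coquelicot Require Import Coquelicot.
Open Scope C_scope.

Lemma pow_n_Cpow (x : C) n : pow_n x n = Cpow x n.
Proof. induction n; simpl; [reflexivity| rewrite IHn; reflexivity]. Qed.

Lemma Cpow_add x a b : Cpow x (a+b) = Cpow x a * Cpow x b.
Proof. induction a; simpl. ring. rewrite IHa; ring. Qed.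
Lemma Cpow_mul_l x y n : Cpow (x*y) n = Cpow x n * Cpow y n.
Proof. induction n; simpl. ring. rewrite IHn; ring. Qed.
Lemma Cpow_mul_r x a b : Cpow x (a*b) = Cpow (Cpow x a) b.
Proof. induction a; simpl. induction b; simpl; [ring| rewrite <- IHb; ring].
  rewrite Cpow_add, IHa, Cpow_mul_l. reflexivity. Qed.
Lemma Cpow_S x n : Cpow x (S n) = x * Cpow x n.
Proof. reflexivity. Qed.

Fixpoint csum (f : nat -> C) (n : nat) : C :=
  match n with O => f O | S m => csum f m + f (S m) end.
Lemma sum_n_csum f n : sum_n f n = csum f n.
Proof. induction n. rewrite sum_O; reflexivity. rewrite sum_Sn, IHn. reflexivity. Qed.

Lemma limC_iff (u : nat -> C) l : filterlim u eventually (locally l) <->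
  forall eps, (0<eps)%R -> exists N, forall n, (N<=n)%nat -> (Cmod (u n - l) < eps)%R.
Proof.
  rewrite filterlim_locally_ball_norm. split.
  - intros H eps Heps. destruct (H (mkposreal eps Heps)) as [N HN].
    exists N. intros n Hn. specialize (HN n Hn). unfold ball_norm in HN.
    exact HN.
  - intros H eps. destruct (H eps (cond_pos eps)) as [N HN]. exists N.
    intros n Hn. unfold ball_norm. apply HN; auto.
Qed.
Lemma ratio_ex (b : nat -> R) (K r : R) : (0 <= r < 1)%R -> (forall n, 0 <= b n)%R ->
  (forall n, b (S n) <= b n * (K * r^n))%R -> ex_series b.
Proof.
  intros [Hr0 Hr1] Hb0 Hb.
  assert (Hy : (0 < / (2 * (Rabs K + 1)))%R).
  { apply Rinv_0_lt_compat. pose proof (Rabs_pos K). lra. }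
  destruct (pow_lt_1_zero r ltac:(rewrite Rabs_right; lra) _ Hy) as [N0 HN0].
  assert (Hhalf : forall n, (n >= N0)%nat -> (b (S n) <= b n * / 2)%R).
  { intros n Hn. eapply Rle_trans. apply Hb. apply Rmult_le_compat_l. apply Hb0.
    specialize (HN0 n Hn). rewrite Rabs_right in HN0 by (apply Rle_ge, pow_le; lra).
    eapply Rle_trans. apply Rmult_le_compat_r. apply pow_le; lra. apply Rle_abs.
    assert (0 <= Rabs K)%R by apply Rabs_pos.
    assert (Rabs K * r ^ n <= Rabs K * / (2 * (Rabs K + 1)))%R.
    { apply Rmult_le_compat_l; lra. }
    assert (Rabs K * / (2 * (Rabs K + 1)) <= /2)%R.
    { apply (Rmult_le_reg_r (2 * (Rabs K + 1))). lra.
      rewrite Rmult_assoc, Rinv_l by lra. field_simplify; lra. }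
    lra. }
  assert (Hk : forall k, (b (N0 + k)%nat <= b N0 * (/2)^k)%R).
  { induction k. rewrite Nat.add_0_r. simpl. lra.
    replace (N0 + S k)%nat with (S (N0 + k)) by lia.
    eapply Rle_trans. apply Hhalf. lia. simpl.
    apply (Rmult_le_compat_r (/2)) in IHk; lra. }
  apply (ex_series_incr_n b N0).
  apply (ex_series_le (V := R_CompleteNormedModule)) with (b := fun k => (b N0 * (/2)^k)%R).
  - intros n. change (norm (b (N0 + n)%nat)) with (Rabs (b (N0 + n)%nat)).
    rewrite Rabs_right by (apply Rle_ge, Hb0). apply Hk.
  - exists (b N0 * / (1 - /2))%R.
    pose proof (is_series_scal_l (V := R_NormedModule) (b N0) _ _
      (is_series_geom (/2) ltac:(rewrite Rabs_right; lra))) as HH.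
    exact HH.
Qed.
Lemma normC (x : C) : norm x = Cmod x.
Proof. reflexivity. Qed.

Lemma exC_of_mod (a : nat -> C) (b : nat -> R) :
  (forall n, Cmod (a n) <= b n)%R -> ex_series b -> ex_series a.
Proof. intros H Hb. apply (ex_series_le a b); auto. Qed.

Lemma csum_Cmod (a : nat -> C) n : (Cmod (csum a n) <= sum_n (fun k => Cmod (a k)) n)%R.
Proof.
  induction n; simpl. rewrite sum_O. lra.
  rewrite sum_Sn. eapply Rle_trans. apply Cmod_triangle. change plus with Rplus. lra.
Qed.

Lemma series_bound (a : nat -> C) (b : nat -> R) l B :
  (forall n, Cmod (a n) <= b n)%R -> is_series a l -> is_series b B -> (Cmod l <= B)%R.
Proof.
  intros H Ha Hb.
  assert (H1 : is_lim_seq (fun N => Cmod (sum_n a N)) (Cmod l)).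
  { apply (filterlim_comp _ _ _ (sum_n a) norm _ _ _ Ha (filterlim_norm l)). }
  assert (H2 : is_lim_seq (sum_n b) B) by exact Hb.
  assert (H3 : forall N, (Cmod (sum_n a N) <= sum_n b N)%R).
  { intros N. rewrite sum_n_csum. eapply Rle_trans. apply csum_Cmod.
    induction N. rewrite !sum_O. apply H. rewrite !sum_Sn. change plus with Rplus.
    specialize (H (S N)). lra. }
  pose proof (is_lim_seq_le _ _ _ _ H3 H1 H2). simpl in H0. exact H0.
Qed.
Lemma qpoch_S a p n : qpoch a p (S n) = qpoch a p n * (1 - a * Cpow p n).
Proof. simpl. rewrite pow_n_Cpow. reflexivity. Qed.

Lemma Cmod_pow_le1 p n : (Cmod p <= 1)%R -> (Cmod (Cpow p n) <= 1)%R.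
Proof. intros H. induction n; simpl. rewrite Cmod_1; lra.
  rewrite Cmod_mult. pose proof (Cmod_ge_0 p). pose proof (Cmod_ge_0 (Cpow p n)). nra. Qed.

Lemma Cmod_powS_le p n : (Cmod p <= 1)%R -> (Cmod (Cpow p (S n)) <= Cmod p)%R.
Proof. intros H. simpl. rewrite Cmod_mult. pose proof (Cmod_pow_le1 p n H).
  pose proof (Cmod_ge_0 p). nra. Qed.

Lemma one_minus_ge z : (1 - Cmod z <= Cmod (1 - z))%R.
Proof. pose proof (Cmod_triangle (1 - z) z). assert (E : 1 - z + z = 1) by ring. rewrite E in H.
  rewrite Cmod_1 in H. lra. Qed.

Lemma one_minus_nz z : (Cmod z < 1)%R -> 1 - z <> 0.
Proof. intros H E. pose proof (one_minus_ge z). rewrite E, Cmod_0 in H0. lra. Qed.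

Lemma one_plus_nz z : (Cmod z < 1)%R -> 1 + z <> 0.
Proof. intros H. replace (1 + z) with (1 - (- z)) by ring. apply one_minus_nz.
  rewrite Cmod_opp. exact H. Qed.

Lemma one_minus_powS_nz p n : (Cmod p < 1)%R -> 1 - Cpow p (S n) <> 0.
Proof. intros H. apply one_minus_nz. pose proof (Cmod_powS_le p n). lra. Qed.

Fixpoint cE (p : C) (n : nat) : C :=
  match n with O => 1 | S m => cE p m * (- Cpow p m) / (1 - Cpow p (S m)) end.

Lemma cE_S p n : cE p (S n) = cE p n * (- Cpow p n) / (1 - Cpow p (S n)).
Proof. reflexivity. Qed.

Definition eT p x n := cE p n * Cpow x n.

Lemma cE_ratio_bound p n : (Cmod p < 1)%R ->
  (Cmod (cE p (S n)) <= Cmod (cE p n) * (/ (1 - Cmod p) * Cmod p ^ n))%R.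
Proof.
  intros H. rewrite cE_S. unfold Cdiv. rewrite !Cmod_mult, Cmod_opp, Cmod_pow.
  rewrite Cmod_inv by (apply one_minus_powS_nz; auto).
  pose proof (Cmod_ge_0 (cE p n)). pose proof (pow_le (Cmod p) n (Cmod_ge_0 p)).
  assert (H2 : (1 - Cmod p <= Cmod (1 - Cpow p (S n)))%R).
  { pose proof (one_minus_ge (Cpow p (S n))). pose proof (Cmod_powS_le p n). lra. }
  assert (H3 : (/ Cmod (1 - Cpow p (S n)) <= / (1 - Cmod p))%R).
  { apply Rinv_le_contravar; lra. }
  rewrite Rmult_assoc. apply Rmult_le_compat_l. auto.
  rewrite Rmult_comm. apply Rmult_le_compat_r; auto.
Qed.

Lemma cE_mod_ex p (R0 : R) : (Cmod p < 1)%R -> (0 <= R0)%R ->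
  ex_series (fun n => Cmod (cE p n) * R0 ^ n)%R.
Proof.
  intros H HR. apply ratio_ex with (K := (/ (1 - Cmod p) * R0)%R) (r := Cmod p).
  - split; [apply Cmod_ge_0 | auto].
  - intros n. apply Rmult_le_pos. apply Cmod_ge_0. apply pow_le; auto.
  - intros n. simpl pow. pose proof (cE_ratio_bound p n H).
    pose proof (pow_le R0 n HR). pose proof (pow_le (Cmod p) n (Cmod_ge_0 p)).
    assert (0 < / (1 - Cmod p))%R by (apply Rinv_0_lt_compat; lra).
    replace (Cmod (cE p n) * R0 ^ n * (/ (1 - Cmod p) * R0 * Cmod p ^ n))%R with
      ((Cmod (cE p n) * (/ (1 - Cmod p) * Cmod p ^ n)) * (R0 * R0 ^ n))%R by ring.
    apply Rmult_le_compat_r. nra. auto.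
Qed.

Lemma eT_ex p x : (Cmod p < 1)%R -> ex_series (eT p x).
Proof.
  intros H. apply exC_of_mod with (b := fun n => (Cmod (cE p n) * Cmod x ^ n)%R).
  - intros n. unfold eT. rewrite Cmod_mult, Cmod_pow. lra.
  - apply cE_mod_ex; auto. apply Cmod_ge_0.
Qed.
Definition Ef p x : C := epsilon (inhabits (RtoC 0)) (fun L : C => is_series (eT p x) L).

Lemma Ef_spec p x : (Cmod p < 1)%R -> is_series (eT p x) (Ef p x).
Proof. intros H. unfold Ef. apply epsilon_spec. apply eT_ex; auto. Qed.

Lemma is_series_C_unique (a : nat -> C) l1 l2 : is_series a l1 -> is_series a l2 -> l1 = l2.
Proof. intros H1 H2. exact (filterlim_locally_unique _ _ _ H1 H2). Qed.

Lemma is_series_C_ext (a b : nat -> C) (l l' : C) : (forall n, a n = b n) -> l = l' ->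
  is_series a l -> is_series b l'.
Proof. intros H E S. subst. eapply is_series_ext; eauto. Qed.

Lemma Ef_fun p x : (Cmod p < 1)%R -> Ef p x = (1 - x) * Ef p (x * p).
Proof.
  intros Hp.
  pose proof (Ef_spec p (x * p) Hp) as S1.
  pose proof (is_series_scal_l (V := C_NormedModule) x _ _ S1) as S2.
  set (sh := fun n => match n with O => RtoC 0 | S m => x * eT p (x * p) m end).
  assert (S3 : is_series sh (x * Ef p (x * p))).
  { apply is_series_decr_1.
    refine (is_series_C_ext _ _ _ _ (fun n => eq_refl) _ S2).
    change (x * Ef p (x * p) = x * Ef p (x * p) + - RtoC 0). ring. }
  pose proof (is_series_minus _ _ _ _ S1 S3) as S4.
  apply (is_series_C_unique (eT p x)). apply Ef_spec; auto.
  replace ((1 - x) * Ef p (x * p)) with (plus (Ef p (x * p)) (opp (x * Ef p (x * p)))).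
  2: { change (Ef p (x * p) + - (x * Ef p (x * p)) = (1 - x) * Ef p (x * p)). ring. }
  apply (is_series_ext _ _ _ ) with (2 := S4).
  intros n. change (eT p (x * p) n + - sh n = eT p x n).
  destruct n as [|m].
  - simpl. unfold eT. simpl. ring.
  - simpl sh. unfold eT. rewrite cE_S, !Cpow_mul_l, !Cpow_S.
    pose proof (one_minus_powS_nz p m Hp) as Hnz. rewrite Cpow_S in Hnz.
    field. auto.
Qed.

Lemma Ef_iter p x N : (Cmod p < 1)%R -> Ef p x = qpoch x p N * Ef p (x * Cpow p N).
Proof.
  intros Hp. induction N.
  - simpl. replace (x * 1) with x by ring. ring.
  - rewrite IHN, (Ef_fun p (x * Cpow p N) Hp), qpoch_S, Cpow_S.
    replace (x * Cpow p N * p) with (x * (p * Cpow p N)) by ring. ring.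
Qed.
Lemma Ef_near1 p : (Cmod p < 1)%R -> exists K, (0 <= K)%R /\
  forall y, (Cmod y <= 1)%R -> (Cmod (Ef p y - 1) <= Cmod y * K)%R.
Proof.
  intros Hp.
  assert (Hex : ex_series (fun k => Cmod (cE p (S k)))).
  { pose proof (cE_mod_ex p 1 Hp ltac:(lra)) as H. apply ex_series_incr_1 in H.
    eapply ex_series_ext; [|exact H]. intros n. simpl. rewrite pow1. ring. }
  set (K := Series (fun k => Cmod (cE p (S k)))).
  assert (HK : is_series (fun k => Cmod (cE p (S k))) K) by (apply Series_correct; auto).
  exists (Rabs K). split. apply Rabs_pos.
  intros y Hy.
  pose proof (Ef_spec p y Hp) as HS.
  assert (S' : is_series (fun k => eT p y (S k)) (Ef p y - 1)).
  { apply is_series_incr_1. refine (is_series_C_ext _ _ _ _ (fun n => eq_refl) _ HS).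
    change (Ef p y = Ef p y - 1 + eT p y O). unfold eT. simpl. ring. }
  assert (HB : is_series (fun k => Cmod y * Cmod (cE p (S k)))%R (Cmod y * K)%R).
  { pose proof (is_series_scal_l (V := R_NormedModule) (Cmod y) _ _ HK) as H. exact H. }
  eapply Rle_trans. refine (series_bound _ _ _ _ _ S' HB).
  2: { apply Rmult_le_compat_l. apply Cmod_ge_0. apply Rle_abs. }
  intros k. cbv beta. unfold eT. rewrite Cmod_mult, Cmod_pow.
  change (Cmod y ^ S k)%R with (Cmod y * Cmod y ^ k)%R.
  pose proof (pow_le (Cmod y) k (Cmod_ge_0 y)).
  assert (Cmod y ^ k <= 1)%R by (rewrite <- (pow1 k); apply pow_incr; split; [apply Cmod_ge_0|auto]).
  pose proof (Cmod_ge_0 (cE p (S k))). pose proof (Cmod_ge_0 y).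
  assert (0 <= Cmod (cE p (S k)) * Cmod y)%R by (apply Rmult_le_pos; auto).
  assert (Cmod (cE p (S k)) * Cmod y * Cmod y ^ k <= Cmod (cE p (S k)) * Cmod y * 1)%R
    by (apply Rmult_le_compat_l; auto).
  nra.
Qed.
Lemma Ef_prod p x : (Cmod p < 1)%R -> qpoch_inf_is x p (Ef p x).
Proof.
  intros Hp. unfold qpoch_inf_is. apply limC_iff. intros eps He.
  destruct (Ef_near1 p Hp) as [K [HK0 HK]].
  set (E := Ef p x).
  pose proof (Cmod_ge_0 x) as Hx0. pose proof (Cmod_ge_0 E) as HE0.
  set (m := Rmin 1 eps).
  assert (Hm : (0 < m /\ m <= 1 /\ m <= eps)%R).
  { unfold m. split. apply Rmin_glb_lt; lra. split. apply Rmin_l. apply Rmin_r. }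
  set (D := (4 * (Cmod x + 1) * (K + 1) * (Cmod E + 1))%R).
  assert (HD : (0 < D)%R) by (unfold D; repeat apply Rmult_lt_0_compat; lra).
  set (d := (m / D)%R).
  assert (Hd : (0 < d)%R) by (unfold d; apply Rdiv_lt_0_compat; lra).
  destruct (pow_lt_1_zero (Cmod p) ltac:(rewrite Rabs_right; [lra| apply Rle_ge, Cmod_ge_0]) d Hd)
    as [N HN].
  exists N. intros n Hn.
  specialize (HN n Hn). rewrite Rabs_right in HN by (apply Rle_ge, pow_le, Cmod_ge_0).
  set (y := x * Cpow p n).
  assert (Hy : (Cmod y <= Cmod x * d)%R).
  { unfold y. rewrite Cmod_mult, Cmod_pow. apply Rmult_le_compat_l; lra. }
  assert (Hu : (Cmod x * d * ((K + 1) * (Cmod E + 1)) <= m / 4)%R).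
  { unfold d, D.
    replace (Cmod x * (m / (4 * (Cmod x + 1) * (K + 1) * (Cmod E + 1))) * ((K + 1) * (Cmod E + 1)))%R
      with (m / 4 * (Cmod x / (Cmod x + 1)))%R by (field; lra).
    assert (Hq : (Cmod x / (Cmod x + 1) <= 1)%R).
    { unfold Rdiv. apply Rmult_le_reg_r with (Cmod x + 1)%R. lra.
      rewrite Rmult_assoc, Rinv_l by lra. lra. }
    assert (0 <= m/4)%R by lra. nra. }
  assert (Hy0 : (0 <= Cmod y)%R) by apply Cmod_ge_0.
  assert (HyK : (Cmod y * K <= m / 4)%R).
  { eapply Rle_trans. apply Rmult_le_compat_r. lra. exact Hy.
    eapply Rle_trans; [|exact Hu].
    assert (0 <= Cmod x * d)%R by (apply Rmult_le_pos; lra).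
    apply Rmult_le_compat_l; auto. nra. }
  assert (Hy1 : (Cmod y <= 1)%R).
  { eapply Rle_trans. exact Hy. assert (0 <= Cmod x * d)%R by (apply Rmult_le_pos; lra).
    assert (Cmod x * d * 1 <= Cmod x * d * ((K + 1) * (Cmod E + 1)))%R
      by (apply Rmult_le_compat_l; nra). lra. }
  assert (HyKE : (Cmod y * K * Cmod E <= eps / 4)%R).
  { assert (0 <= Cmod x * d)%R by (apply Rmult_le_pos; lra).
    assert (Cmod y * K * Cmod E <= Cmod x * d * K * Cmod E)%R.
    { apply Rmult_le_compat_r; auto. apply Rmult_le_compat_r; auto. }
    assert (Cmod x * d * (K * Cmod E) <= Cmod x * d * ((K + 1) * (Cmod E + 1)))%R
      by (apply Rmult_le_compat_l; nra). lra. }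
  pose proof (HK y Hy1) as Hz.
  set (z := Ef p y) in *.
  pose proof (Ef_iter p x n Hp) as Hit. fold E in Hit. fold y z in Hit.
  set (Q := qpoch x p n) in *.
  assert (Hz1 : (Cmod (z - 1) <= / 4)%R) by lra.
  assert (Hzl : (3/4 <= Cmod z)%R).
  { pose proof (Cmod_triangle (z - 1) (- z)). rewrite Cmod_opp in H.
    assert (E1 : z - 1 + - z = - (1)) by ring. rewrite E1, Cmod_opp, Cmod_1 in H. lra. }
  assert (HQ : (Cmod Q * Cmod z = Cmod E)%R) by (rewrite <- Cmod_mult, Hit; reflexivity).
  assert (HQb : (Cmod Q <= 4/3 * Cmod E)%R).
  { pose proof (Cmod_ge_0 Q). nra. }
  assert (Ed : Q - E = Q * (1 - z)) by (rewrite Hit; ring).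
  rewrite Ed, Cmod_mult.
  assert (E2 : Cmod (1 - z) = Cmod (z - 1)).
  { rewrite <- Cmod_opp. f_equal. ring. }
  rewrite E2. pose proof (Cmod_ge_0 Q). pose proof (Cmod_ge_0 (z - 1)).
  assert (Cmod Q * Cmod (z - 1) <= 4/3 * Cmod E * (Cmod y * K))%R.
  { apply Rmult_le_compat; auto. }
  nra.
Qed.

Lemma Euler p x : (Cmod p < 1)%R -> is_series (eT p x) (Ef p x) /\ qpoch_inf_is x p (Ef p x).
Proof. intros; split; [apply Ef_spec|apply Ef_prod]; auto. Qed.
Lemma csum_tail_bound (a : nat -> C) (M : nat -> R) K N : (K <= N)%nat ->
  (forall k, Cmod (a k) <= M k)%R ->
  (Cmod (csum a N - csum a K) <= sum_n_m M (S K) N)%R.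
Proof.
  intros HKN H.
  assert (E : csum a N - csum a K = sum_n_m a (S K) N).
  { pose proof (sum_n_m_sum_n (G := C_AbelianGroup) a K N HKN) as E.
    rewrite !sum_n_csum in E. symmetry. etransitivity. exact E. reflexivity. }
  rewrite E. eapply Rle_trans. apply (norm_sum_n_m a). apply sum_n_m_le. intros k. apply H.
Qed.

Lemma csum_lim (f : nat -> nat -> C) (g : nat -> C) :
  (forall k, filterlim (fun N => f N k) eventually (locally (g k))) ->
  forall K, filterlim (fun N => csum (f N) K) eventually (locally (csum g K)).
Proof.
  intros H K. induction K. simpl. apply H.
  simpl. rewrite limC_iff in *. intros eps He.
  destruct (IHK (eps/2)%R ltac:(lra)) as [N1 H1].
  destruct (proj1 (limC_iff _ _) (H (S K)) (eps/2)%R ltac:(lra)) as [N2 H2].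
  exists (max N1 N2). intros n Hn.
  specialize (H1 n ltac:(lia)). specialize (H2 n ltac:(lia)).
  assert (E : csum (f n) K + f n (S K) - (csum g K + g (S K)) =
     (csum (f n) K - csum g K) + (f n (S K) - g (S K))) by ring.
  rewrite E. eapply Rle_lt_trans. apply Cmod_triangle. lra.
Qed.

Lemma lim_Cmod_le (u : nat -> C) l B : filterlim u eventually (locally l) ->
  (forall n, Cmod (u n) <= B)%R -> (Cmod l <= B)%R.
Proof.
  intros Hu HB.
  assert (H1 : is_lim_seq (fun N => Cmod (u N)) (Cmod l)).
  { apply (filterlim_comp _ _ _ u norm _ _ _ Hu (filterlim_norm l)). }
  pose proof (is_lim_seq_le _ _ _ _ HB H1 (is_lim_seq_const B)). simpl in H. exact H.
Qed.

Lemma tannery (f : nat -> nat -> C) (g : nat -> C) (M : nat -> R) (L : C) :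
  (forall k, filterlim (fun N => f N k) eventually (locally (g k))) ->
  (forall N k, (Cmod (f N k) <= M k)%R) -> ex_series M -> is_series g L ->
  filterlim (fun N => csum (f N) N) eventually (locally L).
Proof.
  intros Hlim HM HMs Hg.
  assert (HgM : forall k, (Cmod (g k) <= M k)%R).
  { intros k. apply (lim_Cmod_le _ _ _ (Hlim k)). intros; apply HM. }
  apply limC_iff. intros eps He.
  destruct (Cauchy_ex_series _ HMs (mkposreal (eps/6) ltac:(lra))) as [K HK].
  assert (HK' : forall N, (K <= N)%nat -> (sum_n_m M (S K) N < eps/6)%R).
  { intros N HN. destruct (Nat.eq_dec K N) as [->|Hne].
    - rewrite sum_n_m_zero by lia. change (zero : R) with 0%R. lra.
    - specialize (HK (S K) N ltac:(lia) ltac:(lia)). simpl in HK.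
      change (norm (sum_n_m M (S K) N)) with (Rabs (sum_n_m M (S K) N)) in HK.
      eapply Rle_lt_trans. apply Rle_abs. exact HK. }
  unfold is_series in Hg.
  destruct (proj1 (limC_iff _ _) Hg (eps/3)%R ltac:(lra)) as [N1 H1].
  destruct (proj1 (limC_iff _ _) (csum_lim f g Hlim K) (eps/3)%R ltac:(lra)) as [N2 H2].
  exists (max K (max N1 N2)). intros N HN.
  specialize (H1 N ltac:(lia)). rewrite sum_n_csum in H1.
  specialize (H2 N ltac:(lia)).
  pose proof (csum_tail_bound (f N) M K N ltac:(lia) (HM N)) as T1.
  pose proof (csum_tail_bound g M K N ltac:(lia) HgM) as T2.
  specialize (HK' N ltac:(lia)).
  set (X := csum (f N) K - csum g K) in *.
  set (Y := csum (f N) N - csum (f N) K) in *.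
  set (Z := csum g N - csum g K) in *.
  set (W := csum g N - L) in *.
  assert (E : csum (f N) N - L = X + Y + (- Z) + W) by (unfold X, Y, Z, W; ring).
  rewrite E.
  pose proof (Cmod_triangle (X + Y + - Z) W).
  pose proof (Cmod_triangle (X + Y) (- Z)).
  rewrite Cmod_opp in H0.
  pose proof (Cmod_triangle X Y).
  lra.
Qed.
Lemma csum_ext_le (f g : nat -> C) n : (forall k, (k <= n)%nat -> f k = g k) -> csum f n = csum g n.
Proof. induction n; intros H; simpl. apply H; lia. rewrite IHn by (intros; apply H; lia). rewrite H; auto. Qed.
Lemma csum_plus (f g : nat -> C) n : csum (fun k => f k + g k) n = csum f n + csum g n.
Proof. induction n; simpl. ring. rewrite IHn. ring. Qed.
Lemma csum_scal (c : C) (f : nat -> C) n : csum (fun k => c * f k) n = c * csum f n.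
Proof. induction n; simpl. ring. rewrite IHn. ring. Qed.
Lemma csum_shift (f : nat -> C) n : csum f (S n) = f O + csum (fun k => f (S k)) n.
Proof. induction n. simpl. ring. change (csum f (S (S n))) with (csum f (S n) + f (S (S n))).
  rewrite IHn. simpl. ring. Qed.

Lemma Cpow_1 n : Cpow 1 n = 1.
Proof. induction n; simpl. reflexivity. rewrite IHn. ring. Qed.
Lemma Cpow_m1_even k : Cpow (-1) (2 * k) = 1.
Proof. rewrite Cpow_mul_r. replace (Cpow (-1) 2) with (RtoC 1) by (simpl; ring). apply Cpow_1. Qed.
Lemma Cpow_m1_sq k : Cpow (-1) k * Cpow (-1) k = 1.
Proof. rewrite <- Cpow_mul_l. replace (-1 * -1) with (RtoC 1) by ring. apply Cpow_1. Qed.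

Fixpoint Tq (Q : C) (m : nat) : C := match m with O => 1 | S j => Tq Q j * Cpow Q j end.

Lemma Tq_q q m : Tq (q * q) m = Cpow q (m * (m - 1)).
Proof. induction m. simpl. reflexivity. simpl Tq. rewrite IHm, Cpow_mul_l, <- !Cpow_add.
  f_equal. destruct m; simpl; lia. Qed.

Lemma qpoch_nz a p n : (Cmod p < 1)%R -> (Cmod a <= 1)%R -> a <> 1 -> qpoch a p n <> 0.
Abort.

Lemma qpochQ_nz Q n : (Cmod Q < 1)%R -> qpoch Q Q n <> 0.
Proof. intros H. induction n. simpl. intro E. injection E. lra.
  rewrite qpoch_S. apply Cmult_neq_0; auto. rewrite <- Cpow_S. apply one_minus_powS_nz; auto. Qed.

Lemma cE_closed p m : (Cmod p < 1)%R -> cE p m * qpoch p p m = Cpow (-1) m * Tq p m.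
Proof.
  intros Hp. induction m. simpl. ring.
  rewrite cE_S, qpoch_S. simpl Tq.
  transitivity ((cE p m * qpoch p p m) * - Cpow p m).
  - pose proof (one_minus_powS_nz p m Hp). rewrite Cpow_S in H |- *. field. auto.
  - rewrite IHm, Cpow_S. ring.
Qed.

Fixpoint gb (Q : C) (n k : nat) : C :=
  match n, k with
  | O, O => 1 | O, S _ => 0
  | S n', O => 1
  | S n', S k' => gb Q n' (S k') + Cpow Q (n' - k') * gb Q n' k'
  end.

Lemma gb_zero Q n k : (n < k)%nat -> gb Q n k = 0.
Proof. revert k. induction n; intros k H; destruct k; try lia; simpl. reflexivity.
  rewrite !IHn by lia. ring. Qed.

Lemma gb_n0 Q n : gb Q n 0 = 1.
Proof. destruct n; reflexivity. Qed.

Lemma qbin Q A n : qpoch A Q n = csum (fun k => gb Q n k * Cpow (-A) k * Tq Q k) n.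
Proof.
  induction n. simpl. ring.
  set (F := fun k => gb Q n k * Cpow (-A) k * Tq Q k) in *.
  rewrite qpoch_S, IHn, csum_shift.
  rewrite (csum_ext_le (fun k => gb Q (S n) (S k) * Cpow (-A) (S k) * Tq Q (S k))
    (fun k => F (S k) + (-A * Cpow Q n) * F k) n).
  2: { intros k Hk. unfold F. simpl gb. simpl Tq. rewrite Cpow_S.
       assert (EQ : Cpow Q n = Cpow Q (n - k) * Cpow Q k) by (rewrite <- Cpow_add; f_equal; lia).
       rewrite EQ. ring. }
  rewrite csum_plus, csum_scal.
  pose proof (csum_shift F n) as E. change (csum F (S n)) with (csum F n + F (S n)) in E.
  assert (E2 : F (S n) = 0) by (unfold F; rewrite gb_zero by lia; ring).
  assert (E3 : csum (fun k => F (S k)) n = csum F n - F O) 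
    by (rewrite E2 in E; transitivity (F O + csum (fun k => F (S k)) n - F O); [ring| rewrite <- E; ring]).
  rewrite E3. unfold F at 3. rewrite !gb_n0. simpl. ring.
Qed.
Lemma qpoch_0 a p : qpoch a p 0 = 1.
Proof. reflexivity. Qed.

Lemma gb_closed Q n k : (k <= n)%nat -> gb Q n k * qpoch Q Q k * qpoch Q Q (n - k) = qpoch Q Q n.
Proof.
  revert k; induction n; intros k Hk.
  - destruct k; [simpl; ring | lia].
  - destruct k as [|k'].
    + rewrite gb_n0, qpoch_0. replace (S n - 0)%nat with (S n) by lia. ring.
    + change (gb Q (S n) (S k')) with (gb Q n (S k') + Cpow Q (n - k') * gb Q n k').
      replace (S n - S k')%nat with (n - k')%nat by lia.
      destruct (Nat.eq_dec k' n) as [->|Hne].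
      * rewrite gb_zero by lia. rewrite Nat.sub_diag, qpoch_0.
        pose proof (IHn n (Nat.le_refl n)) as H. rewrite Nat.sub_diag, qpoch_0 in H.
        rewrite (qpoch_S Q Q n).
        transitivity ((gb Q n n * qpoch Q Q n * 1) * (1 - Q * Cpow Q n)). simpl. ring.
        rewrite H. ring.
      * assert (Hj : exists j, (n - k' = S j)%nat) by (exists (n - k' - 1)%nat; lia).
        destruct Hj as [j Hj].
        pose proof (IHn (S k') ltac:(lia)) as H1.
        replace (n - S k')%nat with j in H1 by lia.
        pose proof (IHn k' ltac:(lia)) as H2. rewrite Hj in H2. rewrite Hj.
        transitivity ((gb Q n (S k') * qpoch Q Q (S k') * qpoch Q Q j) * (1 - Q * Cpow Q j)
           + Cpow Q (S j) * (gb Q n k' * qpoch Q Q k' * qpoch Q Q (S j)) * (1 - Q * Cpow Q k')).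
        { rewrite !qpoch_S. ring. }
        rewrite H1, H2, (qpoch_S Q Q n).
        assert (EQ : Cpow Q (S j) * (Q * Cpow Q k') = Q * Cpow Q n).
        { rewrite <- Cpow_S, <- Cpow_add, <- Cpow_S. f_equal. lia. }
        rewrite <- Cpow_S. transitivity (qpoch Q Q n * (1 - Cpow Q (S j) * (Q * Cpow Q k'))).
        ring. rewrite EQ. ring.
Qed.
Definition dd q k := Cpow (-1) k * Cpow q (2*k*k + k) / qpoch (q*q) (q*q) k.
Definition ak A q k := Cpow A k * dd q k.
Definition uk q k m := eT (q*q) (- q * Cpow (q*q) (S k)) m.

Lemma Cmod_qq q : (Cmod q < 1)%R -> (Cmod (q*q) < 1)%R.
Proof. intros H. rewrite Cmod_mult. pose proof (Cmod_ge_0 q). nra. Qed.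

Lemma Cpow_qq q j : Cpow (q*q) j = Cpow q (2*j).
Proof. rewrite Cpow_mul_l, <- Cpow_add. f_equal. lia. Qed.

Lemma term_id A q n : (Cmod q < 1)%R ->
  G_term A q n = csum (fun k => ak A q k * uk q k (n - k)) n.
Proof.
  intros Hq. pose proof (Cmod_qq q Hq) as HQ. set (Q := q * q) in *.
  unfold G_term. fold Q. rewrite qbin, !pow_n_Cpow.
  transitivity (csum (fun k => (Cpow q (n*n+2*n) / qpoch Q Q n) *
     (gb Q n k * Cpow (-A) k * Tq Q k)) n).
  { rewrite csum_scal. unfold Cdiv. ring. }
  apply csum_ext_le. intros k Hk.
  destruct (Nat.le_exists_sub k n Hk) as [m [Hm _]]. subst n.
  replace (m + k - k)%nat with m by lia.
  pose proof (qpochQ_nz Q k HQ) as Nk. pose proof (qpochQ_nz Q m HQ) as Nm.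
  pose proof (qpochQ_nz Q (m + k) HQ) as Nn.
  assert (Hgb : gb Q (m + k) k = qpoch Q Q (m + k) / (qpoch Q Q k * qpoch Q Q m)).
  { rewrite <- (gb_closed Q (m + k) k ltac:(lia)). replace (m + k - k)%nat with m by lia.
    field. auto. }
  assert (HcE : cE Q m = Cpow (-1) m * Tq Q m / qpoch Q Q m).
  { rewrite <- (cE_closed Q m HQ). field. auto. }
  unfold ak, uk, dd, eT. fold Q. rewrite Hgb, HcE.
  unfold Q. rewrite !Tq_q. fold Q.
  replace (- A) with (-1 * A) by ring. replace (- q * Cpow Q (S k)) with (-1 * (q * Cpow Q (S k))) by ring.
  rewrite !Cpow_mul_l. rewrite <- Cpow_mul_r. unfold Q. rewrite (Cpow_qq q (S k * m)). fold Q.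
  assert (Key : Cpow q ((m + k) * (m + k) + 2 * (m + k)) * Cpow q (k * (k - 1)) =
     Cpow q (2 * k * k + k) * Cpow q (m * (m - 1)) * Cpow q m * Cpow q (2 * (S k * m))).
  { rewrite <- !Cpow_add. f_equal. destruct k; destruct m; simpl; nia. }
  transitivity (Cpow A k * Cpow (-1) k * (Cpow q ((m + k) * (m + k) + 2 * (m + k)) * Cpow q (k * (k - 1)))
      / (qpoch Q Q k * qpoch Q Q m)).
  { field. auto. }
  rewrite Key.
  transitivity (Cpow A k * Cpow (-1) k * (Cpow (-1) m * Cpow (-1) m) * (Cpow q (2 * k * k + k) * Cpow q (m * (m - 1)) * Cpow q m * Cpow q (2 * (S k * m)))
      / (qpoch Q Q k * qpoch Q Q m)).
  2: { field. auto. }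
  rewrite Cpow_m1_sq. field. auto.
Qed.
Lemma dsum A q N : (Cmod q < 1)%R ->
  csum (G_term A q) N = csum (fun k => ak A q k * csum (uk q k) (N - k)) N.
Proof.
  intros Hq. induction N.
  - simpl. rewrite (term_id A q 0 Hq). reflexivity.
  - change (csum (G_term A q) (S N)) with (csum (G_term A q) N + G_term A q (S N)).
    rewrite IHN, (term_id A q (S N) Hq).
    change (csum (fun k => ak A q k * uk q k (S N - k)) (S N)) with
      (csum (fun k => ak A q k * uk q k (S N - k)) N + ak A q (S N) * uk q (S N) (S N - S N)).
    change (csum (fun k => ak A q k * csum (uk q k) (S N - k)) (S N)) with
      (csum (fun k => ak A q k * csum (uk q k) (S N - k)) N + ak A q (S N) * csum (uk q (S N)) (S N - S N)).
    rewrite (csum_ext_le (fun k => ak A q k * csum (uk q k) (S N - k))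
      (fun k => ak A q k * csum (uk q k) (N - k) + ak A q k * uk q k (S N - k)) N).
    2: { intros k Hk. replace (S N - k)%nat with (S (N - k)) by lia. simpl. ring. }
    rewrite csum_plus, Nat.sub_diag. simpl. ring.
Qed.
Lemma Cpow_neg x j : Cpow (-x) j = Cpow (-1) j * Cpow x j.
Proof. rewrite <- Cpow_mul_l. f_equal. ring. Qed.

Lemma Cpow_m1_odd k : Cpow (-1) (2 * k + 1) = -1.
Proof. rewrite Cpow_add, Cpow_m1_even. simpl. ring. Qed.

Lemma odd_cE q k : (Cmod q < 1)%R ->
  cE (-q) (2*k+1) * qpoch (-q) (q*q) (S k) * qpoch (q*q) (q*q) k = - (Cpow (-1) k * Cpow q (2*k*k+k)).
Proof.
  intros Hq. assert (Hq' : (Cmod (-q) < 1)%R) by (rewrite Cmod_opp; auto).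
  induction k.
  - pose proof (one_minus_powS_nz (-q) 0 Hq') as H. simpl in H.
    change (2*0+1)%nat with 1%nat. rewrite (qpoch_S (-q) (q*q) 0), !qpoch_0, cE_S. simpl.
    field. cbv beta. intros E. apply H. transitivity (RtoC (IZR 1) - - q). ring. exact E.
  - replace (2 * S k + 1)%nat with (S (S (2*k+1))) by lia.
    pose proof (one_minus_powS_nz (-q) (S (2*k+1)) Hq') as H1.
    pose proof (one_minus_powS_nz (-q) (2*k+1) Hq') as H2.
    rewrite (cE_S (-q) (S (2*k+1))), (cE_S (-q) (2*k+1)).
    rewrite (qpoch_S (-q) (q*q) (S k)), (qpoch_S (q*q) (q*q) k).
    set (X := Cpow q (2*k+1)). set (Y := Cpow q (2*k*k+k)).
    assert (E1 : Cpow (-q) (2*k+1) = - X) by (rewrite Cpow_neg, Cpow_m1_odd; unfold X; ring).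
    assert (E2 : Cpow (-q) (S (2*k+1)) = q * X) by (rewrite Cpow_S, E1; ring).
    assert (E3 : Cpow (-q) (S (S (2*k+1))) = - (q * q * X)) by (rewrite Cpow_S, E2; ring).
    assert (E4 : Cpow (q*q) (S k) = q * X).
    { rewrite Cpow_qq. unfold X. rewrite <- Cpow_S. f_equal. lia. }
    assert (E5 : q * q * Cpow (q*q) k = q * X).
    { rewrite <- E4. reflexivity. }
    assert (E6 : Cpow q (2 * S k * S k + S k) = Y * X * X * q).
    { unfold X, Y. rewrite <- !Cpow_add.
      transitivity (Cpow q ((2*k*k+k + (2*k+1) + (2*k+1)) + 1)). f_equal; lia.
      rewrite Cpow_add. simpl. ring. }
    assert (E7 : Cpow (-1) (S k) = - Cpow (-1) k) by (simpl; ring).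
    rewrite E3 in H1. rewrite E2 in H2.
    rewrite E1, E2, E3, E4, E5, E6, E7.
    transitivity ((cE (-q) (2 * k + 1) * qpoch (- q) (q * q) (S k) * qpoch (q * q) (q * q) k) * (- (q * X * X))).
    + field. cbv beta. split; [exact H2 | exact H1].
    + transitivity (- ((-1)^k * Y) * (-(q*X*X))). f_equal. exact IHk. ring.
Qed.
Lemma sumR_le (a b : nat -> R) n : (forall k, a k <= b k)%R -> (sum_n a n <= sum_n b n)%R.
Proof. intros H. induction n. rewrite !sum_O. apply H. rewrite !sum_Sn. change plus with Rplus.
  specialize (H (S n)). lra. Qed.

Lemma partial_le_series (b : nat -> R) B N : (forall k, 0 <= b k)%R -> is_series b B ->
  (sum_n b N <= B)%R.
Proof.
  intros H0 HB.
  assert (Hm : forall j, (sum_n b N <= sum_n b (N + j))%R).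
  { induction j. rewrite Nat.add_0_r. lra. replace (N + S j)%nat with (S (N + j)) by lia.
    rewrite sum_Sn. change plus with Rplus. specialize (H0 (S (N + j))). lra. }
  assert (Hev : eventually (fun n => (sum_n b N <= sum_n b n)%R)).
  { exists N. intros n Hn. replace n with (N + (n - N))%nat by lia. apply Hm. }
  assert (HB' : is_lim_seq (sum_n b) B) by exact HB.
  pose proof (is_lim_seq_le_loc _ _ _ _ Hev (is_lim_seq_const (sum_n b N)) HB'). simpl in H. exact H.
Qed.

Lemma lim_shift (u : nat -> C) l k : filterlim u eventually (locally l) ->
  filterlim (fun N => u (N - k)%nat) eventually (locally l).
Proof.
  rewrite !limC_iff. intros H eps He. destruct (H eps He) as [N0 HN0].
  exists (N0 + k)%nat. intros n Hn. apply HN0. lia.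
Qed.

Lemma lim_scal (u : nat -> C) l c : filterlim u eventually (locally l) ->
  filterlim (fun N => c * u N) eventually (locally (c * l)).
Proof.
  rewrite !limC_iff. intros H eps He.
  pose proof (Cmod_ge_0 c) as Hc.
  destruct (H (eps / (Cmod c + 1))%R ltac:(apply Rdiv_lt_0_compat; lra)) as [N0 HN0].
  exists N0. intros n Hn. specialize (HN0 n Hn).
  assert (E : c * u n - c * l = c * (u n - l)) by ring. rewrite E, Cmod_mult.
  assert (Cmod c * Cmod (u n - l) <= (Cmod c + 1) * Cmod (u n - l))%R.
  { apply Rmult_le_compat_r. apply Cmod_ge_0. lra. }
  assert ((Cmod c + 1) * Cmod (u n - l) < (Cmod c + 1) * (eps / (Cmod c + 1)))%R.
  { apply Rmult_lt_compat_l; lra. }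
  replace ((Cmod c + 1) * (eps / (Cmod c + 1)))%R with eps in H1 by (field; lra). lra.
Qed.

Lemma odd_csum (h : nat -> C) K : (forall k, h (2*k)%nat = 0) ->
  csum (fun k => h (2*k+1)%nat) K = csum h (2*K+1).
Proof.
  intros H0. induction K.
  - simpl. replace (h O) with (RtoC 0) by (symmetry; apply (H0 O)). ring.
  - change (csum (fun k => h (2*k+1)%nat) (S K)) with (csum (fun k => h (2*k+1)%nat) K + h (2 * S K + 1)%nat).
    rewrite IHK.
    replace (2 * S K + 1)%nat with (S (S (2*K+1))) by lia.
    change (csum h (S (S (2*K+1)))) with (csum h (2*K+1) + h (S (2*K+1)) + h (S (S (2*K+1)))).
    replace (S (2*K+1)) with (2 * S K)%nat by lia. rewrite H0.
    replace (S (2 * S K)) with (2 * S K + 1)%nat by lia. ring.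
Qed.

Lemma odd_series (h : nat -> C) H : is_series h H -> (forall k, h (2*k)%nat = 0) ->
  is_series (fun k => h (2*k+1)%nat) H.
Proof.
  intros Hs H0. unfold is_series in *. rewrite limC_iff in *.
  intros eps He. destruct (Hs eps He) as [N0 HN0]. exists N0. intros K HK.
  rewrite sum_n_csum, odd_csum by auto. rewrite <- sum_n_csum. apply HN0. lia.
Qed.
Lemma ak_S A q k : (Cmod q < 1)%R ->
  ak A q (S k) = ak A q k * (- A * Cpow q (4*k+3) / (1 - Cpow (q*q) (S k))).
Proof.
  intros Hq. pose proof (Cmod_qq q Hq) as HQ.
  pose proof (qpochQ_nz (q*q) k HQ) as N1. pose proof (one_minus_powS_nz (q*q) k HQ) as N2.
  unfold ak, dd. rewrite (qpoch_S (q*q) (q*q) k), <- Cpow_S.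
  assert (E : Cpow q (2 * S k * S k + S k) = Cpow q (2*k*k+k) * Cpow q (4*k+3)).
  { rewrite <- Cpow_add. f_equal. lia. }
  rewrite E. simpl (Cpow A (S k)). simpl (Cpow (-1) (S k)). field. split; auto.
Qed.

Lemma ak_ex A q : (Cmod q < 1)%R -> ex_series (fun k => Cmod (ak A q k)).
Proof.
  intros Hq. pose proof (Cmod_qq q Hq) as HQ. pose proof (Cmod_ge_0 q) as Hq0.
  apply ratio_ex with (K := (Cmod A / (1 - Cmod q))%R) (r := Cmod q).
  - split; auto.
  - intros; apply Cmod_ge_0.
  - intros k. rewrite (ak_S A q k Hq), Cmod_mult. apply Rmult_le_compat_l. apply Cmod_ge_0.
    pose proof (one_minus_powS_nz (q*q) k HQ) as N2.
    unfold Cdiv. rewrite !Cmod_mult, Cmod_inv by auto. rewrite Cmod_opp, Cmod_pow.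
    assert (H1 : (Cmod q ^ (4*k+3) <= Cmod q ^ k)%R).
    { replace (4*k+3)%nat with (k + (3*k+3))%nat by lia. rewrite pow_add.
      pose proof (pow_le (Cmod q) k Hq0).
      assert (Cmod q ^ (3*k+3) <= 1)%R.
      { rewrite <- (pow1 (3*k+3)). apply pow_incr. lra. }
      nra. }
    assert (H2 : (1 - Cmod q <= Cmod (1 - Cpow (q*q) (S k)))%R).
    { pose proof (one_minus_ge (Cpow (q*q) (S k))).
      pose proof (Cmod_powS_le (q*q) k ltac:(lra)). rewrite Cmod_mult in H0.
      assert (Cmod q * Cmod q <= Cmod q)%R by nra. lra. }
    assert (H3 : (/ Cmod (1 - Cpow (q*q) (S k)) <= / (1 - Cmod q))%R).
    { apply Rinv_le_contravar; lra. }
    pose proof (Cmod_ge_0 A). pose proof (pow_le (Cmod q) (4*k+3) Hq0).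
    assert (0 <= / Cmod (1 - Cpow (q*q) (S k)))%R.
    { apply Rlt_le, Rinv_0_lt_compat. lra. }
    unfold Rdiv.
    replace (Cmod A * / (1 - Cmod q) * Cmod q ^ k)%R with (Cmod A * Cmod q ^ k * / (1 - Cmod q))%R by ring.
    apply Rmult_le_compat; auto. apply Rmult_le_pos; auto. apply Rmult_le_compat_l; auto.
Qed.
Theorem lemma3p2 (A q s : Complex.C) :
  A <> 0 -> s * s = A -> (Cmod q < 1)%R ->
  exists P Pm Pp : Complex.C,
    qpoch_inf_is (- q) (q * q) P /\
    qpoch_inf_is (- s) (- q) Pm /\
    qpoch_inf_is s (- q) Pp /\
    is_series (G_term A q) (/ (2 * s) * P * (Pm - Pp)).
Proof.
  intros HA Hs Hq.
  pose proof (Cmod_qq q Hq) as HQ.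
  assert (Hq' : (Cmod (-q) < 1)%R) by (rewrite Cmod_opp; auto).
  assert (Hs0 : s <> 0) by (intro E; apply HA; rewrite <- Hs, E; ring).
  set (P := Ef (q*q) (-q)). set (Pm := Ef (-q) (-s)). set (Pp := Ef (-q) s).
  exists P, Pm, Pp.
  split. apply Ef_prod; auto. split. apply Ef_prod; auto. split. apply Ef_prod; auto.
  set (W := fun k => Ef (q*q) (- q * Cpow (q*q) (S k))).
  assert (HW : forall k, is_series (uk q k) (W k)).
  { intros k. apply Ef_spec; auto. }
  assert (HBex : ex_series (fun m => Cmod (cE (q*q) m) * 1 ^ m)%R) by (apply cE_mod_ex; auto; lra).
  set (B := Series (fun m => Cmod (cE (q*q) m) * 1 ^ m)%R).
  assert (HB : is_series (fun m => Cmod (cE (q*q) m) * 1 ^ m)%R B) by (apply Series_correct; auto).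
  assert (Hbound : forall k j, (Cmod (csum (uk q k) j) <= B)%R).
  { intros k j. eapply Rle_trans. apply csum_Cmod.
    eapply Rle_trans. 2: { apply (partial_le_series (fun m => (Cmod (cE (q*q) m) * 1 ^ m)%R) B j); auto.
      intros m. apply Rmult_le_pos. apply Cmod_ge_0. rewrite pow1; lra. }
    apply sumR_le. intros m. unfold uk, eT. rewrite Cmod_mult, Cmod_pow.
    apply Rmult_le_compat_l. apply Cmod_ge_0. apply pow_incr. split. apply Cmod_ge_0.
    rewrite Cmod_mult, Cmod_opp. pose proof (Cmod_powS_le (q*q) k ltac:(lra)).
    pose proof (Cmod_ge_0 q). pose proof (Cmod_ge_0 (Cpow (q * q) (S k))). nra. }
  set (h := fun n => eT (-q) (-s) n - eT (-q) s n).
  assert (Hh : is_series h (Pm - Pp)).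
  { pose proof (is_series_minus _ _ _ _ (Ef_spec (-q) (-s) Hq') (Ef_spec (-q) s Hq')) as H.
    refine (is_series_C_ext _ _ _ _ (fun n => eq_refl) eq_refl H). }
  assert (Hh0 : forall k, h (2*k)%nat = 0).
  { intros k. unfold h, eT. rewrite Cpow_neg, Cpow_m1_even. ring. }
  pose proof (odd_series h _ Hh Hh0) as Hodd.
  pose proof (is_series_scal_l (V := C_NormedModule) (/ (2 * s) * P) _ _ Hodd) as Hsc.
  assert (Hg : is_series (fun k => ak A q k * W k) (/ (2 * s) * P * (Pm - Pp))).
  { refine (is_series_C_ext _ _ _ _ _ eq_refl Hsc). intros k.
    change (/ (2 * s) * P * h (2 * k + 1)%nat = ak A q k * W k).
    pose proof (qpochQ_nz (q*q) k HQ) as Nk.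
    pose proof (odd_cE q k Hq) as Ho.
    pose proof (Ef_iter (q*q) (-q) (S k) HQ) as Hit. fold P in Hit. fold (W k) in Hit.
    unfold h, eT. rewrite Cpow_neg, Cpow_m1_odd.
    assert (Es : Cpow s (2*k+1) = Cpow A k * s).
    { rewrite Cpow_add, <- Cpow_qq, Hs. simpl. ring. }
    rewrite Es. unfold ak, dd. rewrite Hit.
    transitivity (- (W k * Cpow A k * (cE (- q) (2 * k + 1) * qpoch (- q) (q * q) (S k) * qpoch (q * q) (q * q) k)) / qpoch (q*q) (q*q) k).
    { field. split; auto. }
    rewrite Ho. field. auto. }
  unfold is_series.
  apply (filterlim_ext (fun N => csum (fun k => ak A q k * csum (uk q k) (N - k)) N)).
  { intros N. rewrite sum_n_csum, dsum; auto. }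
  apply (tannery _ (fun k => ak A q k * W k) (fun k => Cmod (ak A q k) * B)%R).
  - intros k. apply lim_scal. apply (lim_shift (fun j => csum (uk q k) j)).
    apply (filterlim_ext (sum_n (uk q k))). intros; apply sum_n_csum. apply HW.
  - intros N k. rewrite Cmod_mult. apply Rmult_le_compat_l. apply Cmod_ge_0. apply Hbound.
  - apply ex_series_scal_r. apply ak_ex; auto.
  - exact Hg.
Qed.
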